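(* Let $W_{Y|\mathbf{X}}:\mathcal{X}_1\times\dots\times\mathcal{X}_K\to\mathcal{P}(\mathcal{Y})$ be a discrete memoryless $K$-input multiple-access channel with finite alphabets, cost functions $\phi_k:\mathcal{X}_k\to\mathbb{R}_+$ and cost constraints $\boldsymbol\Phi\in\mathbb{R}_+^K$. If the DI capacity region $\mathsf{C}_{\mathsf{DI}}(W_{Y|\mathbf{X}},\boldsymbol\phi,\boldsymbol\Phi)$ contains a rate tuple $\mathbf{R}$ with $R_k>0$ for all $k\in[K]$, then every sequence $(\mathbf{M}_n)_{n\in\mathbb{N}}$ of code size tuples $\mathbf{M}_n\in\mathbb{N}^K$ is achievable for average-error deterministic identification (DIA) under the constraint $\frac1n\sum_{i=1}^n\boldsymbol\phi(\mathbf{x}_i)\preceq\boldsymbol\Phi$.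
   Context: Notation: $[K]=\{1,\dots,K\}$, $\preceq$ is componentwise $\le$, $\boldsymbol\phi(\mathbf{x})=(\phi_1(x_1),\dots,\phi_K(x_K))$, $W^n_{Y|\mathbf{X}}(y^n|\mathbf{x}^n)=\prod_iW_{Y|\mathbf{X}}(y_i|\mathbf{x}_i)$. An $(\mathbf{M},n)$ DI code is a pair $(\mathbf{f},g)$ with encoders $f_k:[M_k]\to\mathcal{X}_k^n$ and $g:[M_1]\times\dots\times[M_K]\times\mathcal{Y}^n\to\{0,1\}^K$ (components $g_k$); message tuple $\mathbf{m}$ is sent as $\mathbf{f}(\mathbf{m})=(f_1(m_1),\dots,f_K(m_K))$ and $Y^n\sim W^n_{Y|\mathbf{X}}(\cdot|\mathbf{f}(\mathbf{m}))$. Errors: $e_k(\mathbf{m}'|\mathbf{m})=\Pr[g_k(\mathbf{m}',Y^n)\ne\mathbf{1}\{m'_k=m_k\}]$ and $e(\mathbf{m}'|\mathbf{m})=\Pr[\exists k: g_k(\mathbf{m}',Y^n)\ne\mathbf{1}\{m'_k=m_k\}]$. Achievability under the maximal-error criterion: an $(\mathbf{M},n,\boldsymbol\phi,\boldsymbol\Phi,\lambda)$ DI code is an $(\mathbf{M},n)$ DI code whose codeword tuples all satisfy $\frac1n\sum_i\boldsymbol\phi(\mathbf{x}_i)\preceq\boldsymbol\Phi$ and with $e(\mathbf{m}'|\mathbf{m})\le\lambda$ for all $\mathbf{m},\mathbf{m}'$; a rate tuple $\mathbf{R}\in\mathbb{R}_+^K$ is achievable if for every $\lambda>0$ and all large $n$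 such a code exists with $\frac1n\log_2M_k\ge R_k$; $\mathsf{C}_{\mathsf{DI}}$ is the closure of the set of achievable rate tuples. Average-error criterion: for a receiver's tuple $\mathbf{m}'$ and sender $k$, $\bar e_k(\mathbf{m}')$ is the average of $e_k(\mathbf{m}'|\mathbf{m})$ over messages $\mathbf{m}$ with $m_k$ uniform on $[M_k]\setminus\{m'_k\}$ and $m_j$ uniform on $[M_j]$ for $j\ne k$, and $\bar e(\mathbf{m}')=\sum_k\bar e_k(\mathbf{m}')$. An $(\mathbf{M},n,\boldsymbol\phi,\boldsymbol\Phi,\lambda)$ DIA code is an $(\mathbf{M},n)$ DI code satisfying the cost constraint for all codeword tuples, with $e(\mathbf{m}|\mathbf{m})\le\lambda$ for all $\mathbf{m}$ and $\bar e(\mathbf{m}')\le\lambda$ for all $\mathbf{m}'$. A sequence $(\mathbf{M}_n)_{n}$ is achievable if for every $\lambda>0$ and all sufficiently large $n$ there exists an $(\mathbf{M}_n,n,\boldsymbol\phi,\boldsymbol\Phi,\lambda)$ DIA code. *)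

(* Defs.v *)
From HB Require Import structures.
From mathcomp Require Import all_boot all_order all_algebra.
From mathcomp Require Import reals exp.
Set Implicit Arguments. Unset Strict Implicit. Unset Printing Implicit Defensive.
Import Order.TTheory GRing.Theory Num.Theory.
Local Open Scope ring_scope.

Section DI.
Variables (R : realType) (K : nat) (X : 'I_K -> finType) (Y : finType).

Definition input := {dffun forall k : 'I_K, X k}.

Definition is_channel (W : input -> Y -> R) : Prop :=
  (forall x y, 0 <= W x y) /\ (forall x, \sum_(y : Y) W x y = 1).

Definition Wn (W : input -> Y -> R) (n : nat)
  (xs : 'I_n -> input) (ys : {ffun 'I_n -> Y}) : R :=
  \prod_(i < n) W (xs i) (ys i).

Definition msgs (M : 'I_K -> nat) := {dffun forall k : 'I_K, 'I_(M k)}.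

Definition encoder (M : 'I_K -> nat) (n : nat) :=
  forall k : 'I_K, 'I_(M k) -> 'I_n -> X k.

Definition decoder (M : 'I_K -> nat) (n : nat) :=
  msgs M -> {ffun 'I_n -> Y} -> 'I_K -> bool.

Definition cw (M : 'I_K -> nat) (n : nat) (f : encoder M n) (m : msgs M)
  (i : 'I_n) : input := [ffun k => f k (m k) i].

Definition err_k (W : input -> Y -> R) (M : 'I_K -> nat) (n : nat)
  (f : encoder M n) (g : decoder M n) (m' m : msgs M) (k : 'I_K) : R :=
  \sum_(ys : {ffun 'I_n -> Y})
     Wn W (cw f m) ys * (g m' ys k != (m' k == m k))%:R.

Definition err (W : input -> Y -> R) (M : 'I_K -> nat) (n : nat)
  (f : encoder M n) (g : decoder M n) (m' m : msgs M) : R :=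
  \sum_(ys : {ffun 'I_n -> Y})
     Wn W (cw f m) ys * [exists k, g m' ys k != (m' k == m k)]%:R.

Definition cost_ok (phi : forall k : 'I_K, X k -> R) (Phi : 'I_K -> R)
  (M : 'I_K -> nat) (n : nat) (f : encoder M n) : Prop :=
  forall (m : msgs M) (k : 'I_K),
    (n%:R)^-1 * \sum_(i < n) phi k (f k (m k) i) <= Phi k.

Definition DI_code (W : input -> Y -> R) (phi : forall k : 'I_K, X k -> R)
  (Phi : 'I_K -> R) (M : 'I_K -> nat) (n : nat) (lambda : R)
  (f : encoder M n) (g : decoder M n) : Prop :=
  cost_ok phi Phi f /\ (forall m m' : msgs M, err W f g m' m <= lambda).

Definition achievable_rate (W : input -> Y -> R)
  (phi : forall k : 'I_K, X k -> R) (Phi : 'I_K -> R) (Rt : 'I_K -> R) : Prop :=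
  (forall k, 0 <= Rt k) /\
  forall lambda : R, 0 < lambda ->
    exists N : nat, forall n : nat, (N <= n)%N ->
      exists (M : 'I_K -> nat) (f : encoder M n) (g : decoder M n),
        (forall k, (0 < M k)%N) /\
        DI_code W phi Phi lambda f g /\
        (forall k, (n%:R)^-1 * (ln (M k)%:R / ln 2) >= Rt k).

(* C_DI: closure in R^K of the set of achievable rate tuples *)
Definition in_C_DI (W : input -> Y -> R) (phi : forall k : 'I_K, X k -> R)
  (Phi : 'I_K -> R) (Rt : 'I_K -> R) : Prop :=
  forall eps : R, 0 < eps ->
    exists Rt' : 'I_K -> R, achievable_rate W phi Phi Rt' /\
      forall k, `|Rt k - Rt' k| < eps.

(* bar e_k(m'): average of e_k(m'|m) over m with m_k uniform on
   [M_k] \ {m'_k} and m_j uniform on [M_j] (j <> k), i.e. m uniform on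
   {m | m_k <> m'_k}.  (If that set is empty, i.e. M_k = 1, the value is 0.) *)
Definition avg_err_k (W : input -> Y -> R) (M : 'I_K -> nat) (n : nat)
  (f : encoder M n) (g : decoder M n) (m' : msgs M) (k : 'I_K) : R :=
  (#|[pred m : msgs M | m k != m' k]|%:R)^-1 *
  \sum_(m : msgs M | m k != m' k) err_k W f g m' m k.

Definition avg_err (W : input -> Y -> R) (M : 'I_K -> nat) (n : nat)
  (f : encoder M n) (g : decoder M n) (m' : msgs M) : R :=
  \sum_(k < K) avg_err_k W f g m' k.

Definition DIA_code (W : input -> Y -> R) (phi : forall k : 'I_K, X k -> R)
  (Phi : 'I_K -> R) (M : 'I_K -> nat) (n : nat) (lambda : R)
  (f : encoder M n) (g : decoder M n) : Prop :=
  [/\ cost_ok phi Phi f,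
      (forall m : msgs M, err W f g m m <= lambda) &
      (forall m' : msgs M, avg_err W f g m' <= lambda)].

Definition DIA_achievable (W : input -> Y -> R)
  (phi : forall k : 'I_K, X k -> R) (Phi : 'I_K -> R)
  (Ms : nat -> 'I_K -> nat) : Prop :=
  forall lambda : R, 0 < lambda ->
    exists N : nat, forall n : nat, (N <= n)%N ->
      exists (f : encoder (Ms n) n) (g : decoder (Ms n) n),
        DIA_code W phi Phi lambda f g.

End DI.

(* Main.v *)
Require Import Defs.
From HB Require Import structures.
From mathcomp Require Import all_boot all_order all_algebra.
From mathcomp Require Import reals exp.
From mathcomp Require Import ring lra.
Import Order.TTheory GRing.Theory Num.Theory.
Local Open Scope ring_scope.


Section Chan.
Variables (R : realType) (K : nat) (X : 'I_K -> finType) (Y : finType)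
  (W : input X -> Y -> R).
Hypothesis Wch : is_channel W.

Lemma Wn_ge0 n xs ys : 0 <= Wn W (n:=n) xs ys.
Proof. by apply: prodr_ge0 => i _; case: Wch. Qed.

Lemma sum_Wn n (xs : 'I_n -> input X) : \sum_ys Wn W xs ys = 1.
Proof.
rewrite /Wn -(bigA_distr_bigA (fun i y => W (xs i) y)) /=.
by rewrite big1 // => i _; case: Wch => _ ->.
Qed.

Lemma err_k_le1 M n (f : encoder X M n) g m' m k : err_k W f g m' m k <= 1.
Proof.
rewrite /err_k; apply: (@le_trans _ _ (\sum_ys Wn W (cw f m) ys)); last by rewrite sum_Wn.
apply: ler_sum => ys _.
rewrite -[X in _ <= X]mulr1; apply: ler_wpM2l; first exact: Wn_ge0.
by case: (_ != _).
Qed.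

Lemma err_k_le_err M n (f : encoder X M n) g m' m k :
  err_k W f g m' m k <= err W f g m' m.
Proof.
rewrite /err_k /err; apply: ler_sum => ys _.
apply: ler_wpM2l; first exact: Wn_ge0.
case: (boolP (g m' ys k != _)) => H; last by case: [exists _, _].
by have -> : [exists k, g m' ys k != (m' k == m k)] by apply/existsP; exists k.
Qed.

End Chan.
Local Close Scope ring_scope.
Section Count.
Variables (K : nat) (M : 'I_K -> nat) (k : 'I_K).

Definition cnt (i : 'I_(M k)) := #|[pred m : msgs M | m k == i]|.

Lemma cnt_const i j : cnt i = cnt j.
Proof.
pose s (x : 'I_(M k)) := if x == i then j else if x == j then i else x.
have sK : involutive s.
  move=> x; rewrite /s; case: (eqVneq x i) => [->|nxi].
    by rewrite eqxx; case: (eqVneq j i).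
  case: (eqVneq x j) => [->|nxj]; first by rewrite eqxx.
  by rewrite (negbTE nxi) (negbTE nxj).
pose sw (m : msgs M) : msgs M :=
  [ffun t => dfwith (fun t => m t) (s (m k)) t].
have swk m : sw m k = s (m k) by rewrite ffunE dfwith_in.
have swK : involutive sw.
  move=> m; apply/ffunP => t; rewrite ffunE swk sK.
  by case: dfwithP => // t' nt; rewrite ffunE dfwith_out.
rewrite /cnt -!sum1_card (reindex_inj (inv_inj swK)) /=.
apply: eq_bigl => m; rewrite !inE swk /s.
case: (eqVneq (m k) i) => [->|nmi]; first exact: eq_sym.
move: (m k) nmi => x nxi.
by case: ifP => h; rewrite ?eqxx // (negbTE nxi).
Qed.

Lemma card_fiber (P : pred 'I_(M k)) i0 :
  #|[pred m : msgs M | P (m k)]| = #|P| * cnt i0.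
Proof.
rewrite -sum1_card (partition_big (fun m : msgs M => m k) P) //=.
rewrite -sum_nat_const; apply: eq_bigr => i Pi.
rewrite -(cnt_const i i0) /cnt -sum1_card; apply: eq_bigl => m.
rewrite !inE; case: eqP => [->|]; by rewrite ?Pi ?andbF.
Qed.

End Count.

Lemma count_mod (M M0 : nat) (i : 'I_M) : (0 < M0)%N ->
  (#|[pred j : 'I_M | (j != i) && (j %% M0 == i %% M0)]| * M0 <= M.-1)%N.
Proof.
move=> M0pos.
set q := (M.-1 %/ M0)%N.
suff: (#|[pred j : 'I_M | (j != i) && (j %% M0 == i %% M0)]| <= q)%N.
  move=> H; apply: (leq_trans (leq_mul H (leqnn M0))).
  by rewrite /q leq_trunc_div.
have iq : (i %/ M0 < q.+1)%N.
  by rewrite ltnS /q leq_div2r // -ltnS prednK // (leq_ltn_trans _ (ltn_ord i)).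
pose F (j : 'I_M) : 'I_q.+1 := inord (j %/ M0).
have jq (j : 'I_M) : (j %/ M0 < q.+1)%N.
  by rewrite ltnS /q leq_div2r // -ltnS prednK // (leq_ltn_trans _ (ltn_ord j)).
set A := [pred j : 'I_M | _].
have: (#|[pred t : 'I_q.+1 | t != Ordinal iq]| = q)%N.
  by rewrite cardC1 card_ord.
move=> <-.
have -> : #|A| = #|[seq F j | j in A]|.
  rewrite card_in_image // => j1 j2; rewrite !inE => /andP[_ /eqP h1] /andP[_ /eqP h2].
  move/(congr1 val); rewrite /F /= !inordK // => hq.
  apply: val_inj; rewrite /= (divn_eq j1 M0) (divn_eq j2 M0) hq h1 h2 //.
apply: subset_leq_card; apply/subsetP => t /imageP [j]; rewrite !inE => /andP[nji /eqP hm] ->.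
apply/eqP => /(congr1 val); rewrite /F /= inordK // => hq.
by move/eqP: nji; apply; apply: val_inj => /=; rewrite (divn_eq j M0) (divn_eq i M0) hq hm.
Qed.

Local Open Scope ring_scope.
Section Hash.
Variables (R : realType) (K : nat) (X : 'I_K -> finType) (Y : finType)
  (W : input X -> Y -> R).
Hypothesis Wch : is_channel W.
Variables (M M0 : 'I_K -> nat) (hM0 : forall k, (0 < M0 k)%N) (n : nat)
  (f : encoder X M0 n) (g : decoder Y M0 n) (lam0 : R).
Hypothesis lam0_ge0 : 0 <= lam0.
Hypothesis hf : forall m m' : msgs M0, err W f g m' m <= lam0.

Definition hh k (i : 'I_(M k)) : 'I_(M0 k) := Ordinal (ltn_pmod i (hM0 k)).
Arguments hh : clear implicits.
Definition hm (m : msgs M) : msgs M0 := @finfun _ (fun k => 'I_(M0 k)) (fun k => hh k (m k)).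
Definition enc' : encoder X M n := fun k i => f k (hh k i).
Definition dec' : decoder Y M n := fun m' ys k => g (hm m') ys k.

Lemma Wn' m ys : Wn W (cw enc' m) ys = Wn W (cw f (hm m)) ys.
Proof. by apply: eq_bigr => i _; congr W; apply/ffunP => k; rewrite !ffunE. Qed.

Lemma err_diag m : err W enc' dec' m m = err W f g (hm m) (hm m).
Proof.
apply: eq_bigr => ys _; rewrite Wn'; congr (_ * (nat_of_bool _)%:R).
by apply: eq_existsb => k; rewrite !eqxx.
Qed.

Lemma errk_off (m' m : msgs M) (k : 'I_K) : hh k (m k) != hh k (m' k) ->
  err_k W enc' dec' m' m k = err_k W f g (hm m') (hm m) k.
Proof.
move=> nh; apply: eq_bigr => ys _; rewrite Wn'; congr (_ * (nat_of_bool _)%:R).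
rewrite /dec' !ffunE; congr (_ != _).
rewrite eq_sym in nh; rewrite (negbTE nh); apply/negbTE; apply: contra nh => /eqP ->.
by [].
Qed.

Lemma avg_bound (m' : msgs M) (k : 'I_K) : avg_err_k W enc' dec' m' k <= lam0 + (M0 k)%:R^-1.
Proof.
pose b (m : msgs M) := hh k (m k) == hh k (m' k).
have ek m : err_k W enc' dec' m' m k <= lam0 + (b m)%:R.
  rewrite /b; case: (boolP (hh k (m k) == hh k (m' k))) => h /=.
    apply: (le_trans (err_k_le1 _ _ _ _ _ Wch _ _ enc' dec' m' m k)); rewrite lerDr //.
  by rewrite errk_off // addr0; apply: le_trans (err_k_le_err _ _ _ _ _ Wch _ _ f g (hm m') (hm m) k) (hf _ _).
set d := #|[pred m : msgs M | m k != m' k]|.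
set c := #|[pred m : msgs M | (m k != m' k) && b m]|.
have S : \sum_(m : msgs M | m k != m' k) err_k W enc' dec' m' m k
          <= lam0 * d%:R + c%:R.
  apply: le_trans (ler_sum _ (fun m _ => ek m)) _.
  rewrite big_split /=; apply: lerD.
    rewrite (eq_bigl (fun m => m \in [pred m : msgs M | m k != m' k])) //.
    by rewrite sumr_const mulr_natr.
  have -> : \sum_(i : msgs M | i k != m' k) (b i)%:R =
      \sum_(i : msgs M | (i k != m' k) && b i) (1 : R).
    by rewrite big_mkcondr /=; apply: eq_bigr => i _; case: (b i).
  rewrite (eq_bigl (fun m => m \in [pred m : msgs M | (m k != m' k) && b m])) //.
  by rewrite sumr_const.
have cd : (c * M0 k <= d)%N.
  rewrite /c /d.
  have -> : #|[pred m : msgs M | (m k != m' k) && b m]| =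
     #|[pred m : msgs M | [pred j : 'I_(M k) | (j != m' k) && ((j %% M0 k)%N == (m' k %% M0 k)%N)] (m k)]|.
    by apply: eq_card => m; rewrite !inE /b -val_eqE.
  rewrite (card_fiber _ _ _ _ (m' k)) (card_fiber _ _ _ [pred j | j != m' k] (m' k)).
  rewrite mulnAC leq_mul2r; apply/orP; right.
  have -> : #|[pred j : 'I_(M k) | j != m' k]| = (M k).-1 by rewrite cardC1 card_ord.
  exact: count_mod (M k) (M0 k) (m' k) (hM0 k).
rewrite /avg_err_k -/d.
have M0R : 0 < (M0 k)%:R :> R by rewrite ltr0n.
case: (posnP d) => [d0|dpos].
  by rewrite d0 invr0 mul0r addr_ge0 // invr_ge0 ltW.
have dR : 0 < d%:R :> R by rewrite ltr0n.
apply: (@le_trans _ _ (d%:R^-1 * (lam0 * d%:R + c%:R))).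
  by apply: ler_wpM2l; [rewrite invr_ge0 ltW | exact: S].
have -> : d%:R^-1 * (lam0 * d%:R + c%:R) = lam0 + c%:R / d%:R :> R.
  by field; rewrite gt_eqF.
rewrite lerD2l ler_pdivrMr // mulrC ler_pdivlMr // -natrM ler_nat.
exact: cd.
Qed.

Lemma cost_enc' (phi : forall k : 'I_K, X k -> R) (Phi : 'I_K -> R) :
  cost_ok phi Phi f -> cost_ok phi Phi enc'.
Proof. by move=> H m k; have := H (hm m) k; rewrite /hm ffunE. Qed.

Lemma hash_DIA (phi : forall k : 'I_K, X k -> R) (Phi : 'I_K -> R) (lam : R) :
  cost_ok phi Phi f -> (forall k, (M0 k)%:R^-1 <= lam0) ->
  lam0 <= lam -> K%:R * (2 * lam0) <= lam ->
  exists (f' : encoder X M n) (g' : decoder Y M n), DIA_code W phi Phi lam f' g'.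
Proof.
move=> cf hM hl hK; exists enc', dec'; split.
- exact: cost_enc'.
- by move=> m; rewrite err_diag; apply: le_trans (hf _ _) hl.
- move=> m'; rewrite /avg_err.
  apply: (@le_trans _ _ (\sum_(k < K) (2 * lam0))); last first.
  by rewrite big_const_ord iter_addr addr0 -(mulr_natl (2 * lam0) K).
  apply: ler_sum => k _; apply: le_trans (avg_bound m' k) _.
  have := hM k; lra.
Qed.

End Hash.


Theorem theorem3 (R : realType) (K : nat) (X : 'I_K -> finType) (Y : finType)
  (W : input X -> Y -> R) (phi : forall k : 'I_K, X k -> R) (Phi : 'I_K -> R) :
  is_channel W ->
  (forall k (x : X k), 0 <= phi k x) ->
  (forall k, 0 <= Phi k) ->
  (exists Rt : 'I_K -> R, in_C_DI W phi Phi Rt /\ (forall k, 0 < Rt k)) ->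
  forall Ms : nat -> 'I_K -> nat, DIA_achievable W phi Phi Ms.
Proof.
move=> Wch _ _ [Rt [HC Rtpos]] Ms lam lampos.
pose lam0 := lam / (2 * (K.+1)%:R).
have KR : 0 < (K.+1)%:R :> R by rewrite ltr0n.
have lam0pos : 0 < lam0 by rewrite divr_gt0 // mulr_gt0.
have lam0le : lam0 <= lam.
  rewrite ler_pdivrMr ?mulr_gt0 // ler_peMr ?ltW //.
  have : 1 <= (K.+1)%:R :> R by rewrite ler1n.
  lra.
have lamK : K%:R * (2 * lam0) <= lam.
  have -> : K%:R * (2 * lam0) = lam * (K%:R / (K.+1)%:R).
    by rewrite /lam0; field; apply: lt0r_neq0; have := ler0n R K; lra.
  apply: ler_piMr; first exact: ltW.
  rewrite ler_pdivrMr // mul1r ler_nat; exact: leqnSn.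
pose eps := \big[Order.min/1]_(k : 'I_K) Rt k.
have epspos : 0 < eps by apply: lt_bigmin => //.
have epsle k : eps <= Rt k by apply: bigmin_le.
have [Rt' [[_ Hach] close]] := HC eps epspos.
have Rt'pos k : 0 < Rt' k.
  have := close k; have := epsle k; have := ler_norm (Rt k - Rt' k); lra.
have [N1 HN1] := Hach lam0 lam0pos.
pose T := (Num.truncn (lam0^-1)).+1.
have TR : lam0^-1 < T%:R by apply: truncnS_gt.
have l2 : 0 < ln (2 : R) by apply: ln_gt0; lra.
pose N2 k := (Num.truncn (ln (T%:R : R) / (Rt' k * ln 2))).+1.
pose N := maxn N1 (\max_(k : 'I_K) N2 k).
exists N => n Hn.
have [M0 [f [g [M0pos [[costf errf] rate]]]]] :=
  HN1 n (leq_trans (leq_maxl _ _) Hn).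
have M0T k : (T <= M0 k)%N.
  rewrite leqNgt; apply/negP => lt.
  have nN2 : (N2 k <= n)%N.
    apply: leq_trans Hn; apply: leq_trans (leq_maxr _ _).
    exact: leq_bigmax.
  have aR : ln (T%:R : R) / (Rt' k * ln 2) < n%:R.
    apply: lt_le_trans (truncnS_gt _) _; rewrite ler_nat; exact: nN2.
  have apos : 0 < n%:R :> R.
    by rewrite ltr0n; apply: leq_trans nN2.
  have h2 : ln (T%:R : R) < n%:R * (Rt' k * ln 2).
    by rewrite -ltr_pdivrMr // mulr_gt0.
  have h3 : ln ((M0 k)%:R : R) < ln (T%:R : R).
    by rewrite ltr_ln ?ltr_nat // posrE ltr0n // (leq_ltn_trans _ lt).
  have h1 : Rt' k * n%:R * ln 2 <= ln ((M0 k)%:R : R).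
    by have := rate k; rewrite mulrC !ler_pdivlMr.
  have : n%:R * (Rt' k * ln 2) = Rt' k * n%:R * ln (2 : R) by ring.
  lra.
have hM k : (M0 k)%:R^-1 <= lam0.
  rewrite -div1r ler_pdivrMr ?ltr0n //.
  have : lam0 * lam0^-1 = 1 by rewrite mulfV // gt_eqF.
  have : lam0 * T%:R <= lam0 * (M0 k)%:R by rewrite ler_pM2l // ler_nat.
  have := ltr_pM2l lam0pos (lam0^-1) (T%:R); rewrite TR => h.
  lra.
exact: (hash_DIA _ _ _ _ W Wch (Ms n) M0 M0pos n f g lam0 (ltW lam0pos)
          (fun m m' => errf m m') phi Phi lam costf hM lam0le lamK).
Qed.
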